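(* Let $n\ge 1$, let $U$ be a unitary on $n$ qubits (the compute qubits), let $\rho$ be an arbitrary $n$-qubit density matrix, and let $\mathcal{E}(\sigma)=\sum_i E_i\sigma E_i^\dagger$ be an arbitrary noise map acting on the compute qubits only. Then there exist $m\ge 1$ and checks $\tilde C_{1,k},\tilde C_{2,k}$ ($k=1,\dots,m$), i.e. $n$-qubit unitaries satisfying $\tilde C_{2,k}\,U\,\tilde C_{1,k}=U$ for every $k$, such that, whenever the probability of obtaining outcome $0$ on all $m$ ancillas in the $m$-layer Pauli check sandwiching protocol (with noise $\mathcal{E}$ acting immediately after $U$) is nonzero, the postselected state $\rho_m$ of the compute qubits satisfies $F(\rho_m,U\rho U^\dagger)=1$.
   Context: The $m$-layer Pauli check sandwiching protocol: for each $k$, let $C_{j,k}=\tilde C_{j,k}\otimes|1\rangle\langle 1|_k+\mathbb{I}\otimes|0\rangle\langle 0|_k$ ($j=1,2$) be the controlled unitary with control on ancilla $k$ and target the compute qubits. Start with the compute qubits in $\rho$ and $m$ ancillas in $|0\rangle$; apply a Hadamard to every ancilla; apply $C_{1,m},\dots,C_{1,1}$ (in this order); apply $U$ to the compute qubits; apply the noise map $\mathcal{E}$ to the compute qubits; apply $C_{2,1},\dots,C_{2,m}$ (in this order); apply a Hadamard to every ancilla; measure all ancillas in the computational basis and keep only the runs in which every ancilla gives outcome $0$. The postselected state $\rho_m$ is the (renormalized) resulting state of the compute qubits. Fidelity is $F(\rho,\omega)=\left(\operatorname{tr}\sqrt{\sqrt{\rho}\,\omega\sqrt{\rho}}\right)^2$.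 *)

(* Defs.v *)
From HB Require Import structures.
From mathcomp Require Import all_boot all_order all_algebra.
From mathcomp Require Import complex mxtens.
From Stdlib Require Import ClassicalEpsilon.

Set Implicit Arguments.
Unset Strict Implicit.
Unset Printing Implicit Defensive.

Import Order.TTheory GRing.Theory Num.Theory.
Local Open Scope ring_scope.

Section Quantum.
Variable R : rcfType.
Local Notation C := (R[i]).

Definition adjmx {p q : nat} (A : 'M[C]_(p, q)) : 'M[C]_(q, p) :=
  map_mx Num.conj (A^T).

Definition qunitary {N : nat} (U : 'M[C]_N) : Prop :=
  adjmx U *m U = 1%:M.

Definition psdmx {N : nat} (A : 'M[C]_N) : Prop :=
  adjmx A = A /\ forall v : 'cV[C]_N, 0 <= (adjmx v *m A *m v) ord0 ord0.

Definition density_matrix {N : nat} (rho : 'M[C]_N) : Prop :=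
  psdmx rho /\ \tr rho = 1.

Definition sqrtmx {N : nat} (A : 'M[C]_N) : 'M[C]_N :=
  epsilon (inhabits 0) (fun S : 'M[C]_N => psdmx S /\ S *m S = A).

Definition fidelity {N : nat} (rho omega : 'M[C]_N) : C :=
  (\tr (sqrtmx (sqrtmx rho *m omega *m sqrtmx rho))) ^+ 2.

(* System = compute register ('I_(2^n)) (x) ancilla register ('I_(2^m)),
   combined with the Kronecker product [*t].  Ancilla k (k : 'I_m; the
   paper's ancilla k+1) is bit k of the ancilla basis index. *)

Definition anc_bit {m : nat} (k : 'I_m) (x : 'I_(2 ^ m)) : bool :=
  odd (x %/ 2 ^ k).

Definition anc_proj {m : nat} (k : 'I_m) (b : bool) : 'M[C]_(2 ^ m) :=
  \matrix_(x, y) ((x == y) && (anc_bit k x == b))%:R.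

Definition anc_zero (m : nat) : 'M[C]_(2 ^ m) :=
  \matrix_(x, y) (((x : nat) == 0%N) && ((y : nat) == 0%N))%:R.

Definition hadamard : 'M[C]_2 :=
  (sqrtC 2)^-1 *: \matrix_(i, j) (if (i == 1 :> 'I_2) && (j == 1 :> 'I_2)
                                  then -1 else 1).

Definition controlled {n m : nat} (k : 'I_m) (Ct : 'M[C]_(2 ^ n))
  : 'M[C]_(2 ^ n * 2 ^ m) :=
  Ct *t anc_proj k true + (1%:M : 'M[C]_(2 ^ n)) *t anc_proj k false.

Definition hadamard_all (n m : nat) : 'M[C]_(2 ^ n * 2 ^ m) :=
  (1%:M : 'M[C]_(2 ^ n)) *t (hadamard ^t m).

Definition conjby {N : nat} (V sigma : 'M[C]_N) : 'M[C]_N :=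
  V *m sigma *m adjmx V.

Definition noise_on_compute {n m K : nat} (E : 'I_K -> 'M[C]_(2 ^ n))
  (sigma : 'M[C]_(2 ^ n * 2 ^ m)) : 'M[C]_(2 ^ n * 2 ^ m) :=
  \sum_(i < K) conjby (E i *t (1%:M : 'M[C]_(2 ^ m))) sigma.

Definition apply_seq {N m : nat} (F : 'I_m -> 'M[C]_N) (s : seq 'I_m)
  (sigma : 'M[C]_N) : 'M[C]_N :=
  foldl (fun st k => conjby (F k) st) sigma s.

Definition protocol_final_state {n m K : nat} (C1 C2 : 'I_m -> 'M[C]_(2 ^ n))
  (U : 'M[C]_(2 ^ n)) (E : 'I_K -> 'M[C]_(2 ^ n)) (rho : 'M[C]_(2 ^ n))
  : 'M[C]_(2 ^ n * 2 ^ m) :=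
  let s0 := rho *t anc_zero m in
  let s1 := conjby (hadamard_all n m) s0 in
  let s2 := apply_seq (fun k => controlled k (C1 k)) (rev (enum 'I_m)) s1 in
  let s3 := conjby (U *t (1%:M : 'M[C]_(2 ^ m))) s2 in
  let s4 := noise_on_compute E s3 in
  let s5 := apply_seq (fun k => controlled k (C2 k)) (enum 'I_m) s4 in
  conjby (hadamard_all n m) s5.

Definition allzero_proj (n m : nat) : 'M[C]_(2 ^ n * 2 ^ m) :=
  (1%:M : 'M[C]_(2 ^ n)) *t anc_zero m.

Definition ptrace_anc {n m : nat} (A : 'M[C]_(2 ^ n * 2 ^ m)) : 'M[C]_(2 ^ n) :=
  \matrix_(a, b) \sum_(x < 2 ^ m) A (mxtens_index (a, x)) (mxtens_index (b, x)).

Definition prob_allzero {n m K : nat} (C1 C2 : 'I_m -> 'M[C]_(2 ^ n))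
  (U : 'M[C]_(2 ^ n)) (E : 'I_K -> 'M[C]_(2 ^ n)) (rho : 'M[C]_(2 ^ n)) : C :=
  \tr (allzero_proj n m *m protocol_final_state C1 C2 U E rho).

Definition postselected_state {n m K : nat} (C1 C2 : 'I_m -> 'M[C]_(2 ^ n))
  (U : 'M[C]_(2 ^ n)) (E : 'I_K -> 'M[C]_(2 ^ n)) (rho : 'M[C]_(2 ^ n))
  : 'M[C]_(2 ^ n) :=
  (prob_allzero C1 C2 U E rho)^-1 *:
    ptrace_anc (conjby (allzero_proj n m) (protocol_final_state C1 C2 U E rho)).

End Quantum.

(* Main.v *)
Require Import Defs.
From HB Require Import structures.
From mathcomp Require Import all_boot all_order all_algebra.
From mathcomp Require Import complex mxtens.
From mathcomp Require Import spectral sesquilinear.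
From mathcomp Require Import cyclic separable cyclotomic.
From Stdlib Require Import ClassicalEpsilon.

Set Implicit Arguments.
Unset Strict Implicit.
Unset Printing Implicit Defensive.

Import Order.TTheory GRing.Theory Num.Theory.
Local Open Scope ring_scope.




Section Fid.
Variable R : rcfType.
Local Notation C := (R[i]).
Local Open Scope sesquilinear_scope.

Lemma adjmxE p q (A : 'M[C]_(p, q)) : adjmx A = A ^t*.
Proof. by []. Qed.

Lemma adjmxK p q (A : 'M[C]_(p, q)) : adjmx (adjmx A) = A.
Proof. by apply/matrixP => i j; rewrite !mxE conjCK. Qed.

Lemma adjmxM p q r (A : 'M[C]_(p, q)) (B : 'M[C]_(q, r)) :
  adjmx (A *m B) = adjmx B *m adjmx A.
Proof. by rewrite /adjmx trmx_mul map_mxM. Qed.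

Lemma adjmxD p q (A B : 'M[C]_(p, q)) : adjmx (A + B) = adjmx A + adjmx B.
Proof. by apply/matrixP => i j; rewrite !mxE rmorphD. Qed.

Lemma adjmxN p q (A : 'M[C]_(p, q)) : adjmx (- A) = - adjmx A.
Proof. by apply/matrixP => i j; rewrite !mxE rmorphN. Qed.

Lemma adjmxB p q (A B : 'M[C]_(p, q)) : adjmx (A - B) = adjmx A - adjmx B.
Proof. by rewrite adjmxD adjmxN. Qed.

Lemma adjmx1 p : adjmx (1%:M : 'M[C]_p) = 1%:M.
Proof. by rewrite /adjmx trmx1 map_mx1. Qed.

Lemma adjmxZ p q (a : C) (A : 'M[C]_(p, q)) : adjmx (a *: A) = a^* *: adjmx A.
Proof. by apply/matrixP => i j; rewrite !mxE rmorphM. Qed.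

Definition ecol N (i : 'I_N) : 'cV[C]_N := \col_j (j == i)%:R.

Lemma quad_ecol N (A : 'M[C]_N) k : (adjmx (ecol k) *m A *m ecol k) ord0 ord0 = A k k.
Proof.
rewrite /ecol /adjmx mxE (bigD1 k) //= big1 ?addr0 => [|j /negbTE jk]; last by rewrite !mxE jk mulr0.
rewrite !mxE eqxx mulr1 (bigD1 k) //= big1 ?addr0 => [|j /negbTE jk].
  by rewrite !mxE eqxx conjC1 mul1r.
by rewrite !mxE jk conjC0 mul0r.
Qed.

Lemma psd_diag_ge0 N (A : 'M[C]_N) i : psdmx A -> 0 <= A i i.
Proof. by case=> _ /(_ (ecol i)); rewrite quad_ecol. Qed.

Lemma psd_tr_ge0 N (A : 'M[C]_N) : psdmx A -> 0 <= \tr A.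
Proof. by move=> pA; rewrite /mxtrace sumr_ge0 // => i _; apply: psd_diag_ge0. Qed.

Lemma psd_conj N (A D : 'M[C]_N) : psdmx A -> adjmx D = D -> psdmx (D *m A *m D).
Proof.
move=> [hA qA] hD; split.
  by rewrite !adjmxM hA hD mulmxA.
move=> v; have := qA (D *m v).
by rewrite adjmxM hD !mulmxA.
Qed.

Lemma herm_sq_tr0 N (H : 'M[C]_N) : adjmx H = H -> \tr (H *m H) = 0 -> H = 0.
Proof.
move=> hH.
have Hc : forall i j, H j i = (H i j)^*.
  by move=> i j; rewrite -{1}hH !mxE.
have -> : \tr (H *m H) = \sum_i \sum_j `|H i j| ^+ 2.
  by rewrite /mxtrace; apply: eq_bigr => i _; rewrite mxE; apply: eq_bigr => j _; rewrite (Hc i j) -normCK.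
move=> /eqP; rewrite psumr_eq0 => [/allP H0|]; last first.
  by move=> i _; rewrite sumr_ge0 // => j _; rewrite exprn_ge0.
apply/matrixP => i j; rewrite mxE.
have /implyP /(_ isT) := H0 i (mem_index_enum _).
rewrite psumr_eq0 => [/allP /(_ j (mem_index_enum _))|]; last first.
  by move=> k _; rewrite exprn_ge0.
by rewrite /= sqrf_eq0 normr_eq0 => /eqP.
Qed.


Lemma adj_diag_ge0 N (s : 'rV[C]_N) : (forall i, 0 <= s 0 i) -> adjmx (diag_mx s) = diag_mx s.
Proof.
move=> s0; apply/matrixP => i j; rewrite /adjmx !mxE eq_sym.
by case: eqVneq => [->|_]; rewrite ?mulr1n ?mulr0n ?conjC0 ?geC0_conj.
Qed.

Lemma quad_diag N (s : 'rV[C]_N) (w : 'cV[C]_N) : (forall i, 0 <= s 0 i) ->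
  0 <= (adjmx w *m diag_mx s *m w) ord0 ord0.
Proof.
move=> s0; rewrite mul_mx_diag mxE sumr_ge0 // => j _.
by rewrite /adjmx !mxE mulrC mulrA -normCK mulr_ge0 ?exprn_ge0 ?normr_ge0.
Qed.

Lemma psd_sqrt_exists N (A : 'M[C]_N) : psdmx A -> exists S, psdmx S /\ S *m S = A.
Proof.
move=> [hA qA].
have nA : A \is normalmx by apply/normalmxP; rewrite -!adjmxE hA.
have [[P d] /= Pu AE] := elimT (orthomx_spectral_subproof (A:=A)) nA.
rewrite invmx_unitary // in AE.
have PP : P *m P^t* = 1%:M := unitarymxP Pu.
have aP : adjmx (P^t* ) = P by rewrite -adjmxE adjmxK.
have dge0 : forall i, 0 <= d 0 i.
  move=> i; have := qA (P^t* *m ecol i).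
  have PAP : P *m A *m P^t* = diag_mx d.
    by rewrite AE !mulmxA PP mul1mx -mulmxA PP mulmx1.
  rewrite adjmxM aP mulmxA -(mulmxA _ P A) -(mulmxA _ (P *m A)) PAP quad_ecol.
  by rewrite mxE eqxx mulr1n.
pose s := \row_i sqrtC (d 0 i).
have sge0 : forall i, 0 <= s 0 i by move=> i; rewrite mxE sqrtC_ge0.
exists (P^t* *m diag_mx s *m P); split; [split|].
- by rewrite !adjmxM adj_diag_ge0 // !adjmxE trmxCK mulmxA.
- move=> v; rewrite !mulmxA.
  have -> : adjmx v *m P^t* = adjmx (P *m v) by rewrite adjmxM.
  by rewrite -(mulmxA _ P v) quad_diag.
have -> : P^t* *m diag_mx s *m P *m (P^t* *m diag_mx s *m P) = P^t* *m (diag_mx s *m diag_mx s) *m P.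
  by rewrite !mulmxA -(mulmxA (P^t* *m diag_mx s) P (P^t* )) PP mulmx1.
rewrite AE mulmx_diag; congr (_ *m _ *m _).
by apply/matrixP => i j; rewrite !mxE -expr2 sqrtCK.
Qed.


Lemma psd_tr0 N (X : 'M[C]_N) : psdmx X -> \tr X = 0 -> X = 0.
Proof.
move=> pX tr0; have [S [[hS _] SS]] := psd_sqrt_exists pX.
by rewrite -SS in tr0 *; rewrite (herm_sq_tr0 hS tr0) mul0mx.
Qed.

Lemma psd_sqrt_uniq N (A B : 'M[C]_N) : psdmx A -> psdmx B -> A *m A = B *m B -> A = B.
Proof.
move=> pA pB AB; have [D DE] : {D | A - B = D} by exists (A - B).
have hD : adjmx D = D by rewrite -DE adjmxB pA.1 pB.1.
have e1 : A *m D = - (D *m B).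
  apply/eqP; rewrite -subr_eq0 opprK -DE mulmxBr mulmxBl AB.
  by rewrite addrA subrK subrr.
have pX := psd_conj pA hD; have pY := psd_conj pB hD.
have trX : \tr (D *m A *m D) = - \tr (D *m B *m D).
  by rewrite -mulmxA mxtrace_mulC e1 mulNmx raddfN.
have X0 : \tr (D *m A *m D) = 0.
  apply/le_anti; rewrite psd_tr_ge0 // andbT trX oppr_le0 psd_tr_ge0 //.
have Y0 : \tr (D *m B *m D) = 0 by apply/eqP; rewrite -oppr_eq0 -trX X0.
have D3 : D *m D *m D = 0.
  rewrite -{2}DE.
  by rewrite mulmxBr mulmxBl (psd_tr0 pX X0) (psd_tr0 pY Y0) subrr.
have hD2 : adjmx (D *m D) = D *m D by rewrite adjmxM hD.
have D2 : D *m D = 0.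
  apply: herm_sq_tr0 => //; by rewrite mulmxA D3 mul0mx mxtrace0.
have : D = 0 by apply: herm_sq_tr0 => //; rewrite D2 mxtrace0.
by move/eqP; rewrite -DE subr_eq0 => /eqP.
Qed.

Lemma sqrtmx_spec N (A : 'M[C]_N) : psdmx A -> psdmx (sqrtmx A) /\ sqrtmx A *m sqrtmx A = A.
Proof. by move=> pA; apply: (epsilon_spec (inhabits 0) _ (psd_sqrt_exists pA)). Qed.

Lemma fidelity_self N (w : 'M[C]_N) : density_matrix w -> fidelity w w = 1.
Proof.
move=> [pw trw]; rewrite /fidelity.
have [pS SS] := sqrtmx_spec pw.
set S := sqrtmx w in pS SS *.
have pX := psd_conj pw pS.1.
have [pT TT] := sqrtmx_spec pX.
have -> : sqrtmx (S *m w *m S) = w.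
  by apply: psd_sqrt_uniq => //; rewrite TT -SS !mulmxA.
by rewrite trw expr1n.
Qed.

End Fid.


Section Blk.
Variable R : rcfType.
Local Notation C := (R[i]).

Lemma sum_tens (V : nmodType) p q (F : 'I_(p * q) -> V) :
  \sum_k F k = \sum_(i < p) \sum_(j < q) F (mxtens_index (i, j)).
Proof.
rewrite pair_big /= (reindex (@mxtens_index p q)) /=.
  by apply: eq_bigr => -[i j].
by exists (@mxtens_unindex p q) => k _; rewrite (mxtens_indexK, mxtens_unindexK).
Qed.

Definition blk p q (x y : 'I_q) (A : 'M[C]_(p * q)) : 'M[C]_p :=
  \matrix_(a, b) A (mxtens_index (a, x)) (mxtens_index (b, y)).

Lemma blk_mul p q x y (A B : 'M[C]_(p * q)) :
  blk x y (A *m B) = \sum_z blk x z A *m blk z y B.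
Proof.
apply/matrixP => a b; rewrite !mxE summxE sum_tens exchange_big /=.
by apply: eq_bigr => z _; rewrite !mxE; apply: eq_bigr => c _; rewrite !mxE.
Qed.

Lemma blk_tens p q x y (A : 'M[C]_p) (B : 'M[C]_q) : blk x y (A *t B) = B x y *: A.
Proof. by apply/matrixP => a b; rewrite mxE tensmxE mxE mulrC. Qed.

Lemma blkD p q x y (A B : 'M[C]_(p * q)) : blk x y (A + B) = blk x y A + blk x y B.
Proof. by apply/matrixP => a b; rewrite !mxE. Qed.

Lemma blkZ p q x y c (A : 'M[C]_(p * q)) : blk x y (c *: A) = c *: blk x y A.
Proof. by apply/matrixP => a b; rewrite !mxE. Qed.

Lemma blk_sum p q x y I (r : seq I) (P : pred I) (F : I -> 'M[C]_(p * q)) :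
  blk x y (\sum_(i <- r | P i) F i) = \sum_(i <- r | P i) blk x y (F i).
Proof.
apply/matrixP => a b; rewrite !mxE !summxE; apply: eq_bigr => i _; rewrite mxE //.
Qed.

Lemma blk_adj p q x y (A : 'M[C]_(p * q)) : blk x y (adjmx A) = adjmx (blk y x A).
Proof. by apply/matrixP => a b; rewrite /adjmx !mxE. Qed.

Lemma blk_inj p q (A B : 'M[C]_(p * q)) : (forall x y, blk x y A = blk x y B) -> A = B.
Proof.
move=> H; apply/matrixP => i j.
case: (mxtens_indexP i) => a x; case: (mxtens_indexP j) => b y.
by move/matrixP: (H x y) => /(_ a b); rewrite !mxE.
Qed.

Lemma blk_trace p q (A : 'M[C]_(p * q)) : \tr A = \sum_x \tr (blk x x A).
Proof.
rewrite /mxtrace sum_tens exchange_big /=; apply: eq_bigr => x _.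
by apply: eq_bigr => a _; rewrite mxE.
Qed.

Lemma tens11 p q : (1%:M : 'M[C]_p) *t (1%:M : 'M[C]_q) = 1%:M.
Proof.
apply/matrixP => i j.
case: (mxtens_indexP i) => a x; case: (mxtens_indexP j) => b y.
rewrite tensmxE !mxE (inj_eq (can_inj (@mxtens_indexK p q))) xpair_eqE.
by rewrite -natrM mulnb.
Qed.

Lemma adj_tens p q (A : 'M[C]_p) (B : 'M[C]_q) : adjmx (A *t B) = adjmx A *t adjmx B.
Proof. by rewrite /adjmx trmx_tens map_mxT. Qed.

Definition bdiag p q (A : 'M[C]_(p * q)) (f : 'I_q -> 'M[C]_p) :=
  forall x y, blk x y A = (x == y)%:R *: f x.

Lemma bdiag_mul p q A B f g : @bdiag p q A f -> @bdiag p q B g ->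
  bdiag (A *m B) (fun x => f x *m g x).
Proof.
move=> hA hB x y; rewrite blk_mul (bigD1 x) //= big1 ?addr0.
  by rewrite hA hB eqxx scale1r -scalemxAr.
by move=> z zx; rewrite hA eq_sym (negbTE zx) scale0r mul0mx.
Qed.

Lemma bdiag_tens1 p q (A : 'M[C]_p) : bdiag (A *t (1%:M : 'M[C]_q)) (fun _ => A).
Proof. by move=> x y; rewrite blk_tens mxE. Qed.

Lemma bdiag1 p q : bdiag (1%:M : 'M[C]_(p * q)) (fun _ => 1%:M).
Proof. by rewrite -tens11; apply: bdiag_tens1. Qed.

End Blk.


Section Proto.
Variable R : rcfType.
Local Notation C := (R[i]).

Definition prodl p T (F : T -> 'M[C]_p) (s : seq T) :=
  foldr (fun k acc => F k *m acc) 1%:M s.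

Lemma prodl_cat p T (F : T -> 'M[C]_p) s1 s2 :
  prodl F (s1 ++ s2) = prodl F s1 *m prodl F s2.
Proof. by elim: s1 => [|k s1 IH] /=; rewrite ?mul1mx // IH mulmxA. Qed.

Lemma prodl_map p T T' (F : T -> 'M[C]_p) (f : T' -> T) s :
  prodl F (map f s) = prodl (fun k => F (f k)) s.
Proof. by elim: s => [|k s IH] //=; rewrite IH. Qed.

Lemma prodl_eq_in p (T : eqType) (F G : T -> 'M[C]_p) (s : seq T) :
  {in s, F =1 G} -> prodl F s = prodl G s.
Proof.
elim: s => [|k s IH] //= H; rewrite H ?mem_head // IH // => x xs.
by rewrite H // in_cons xs orbT.
Qed.

Lemma adj_prodl p T (F : T -> 'M[C]_p) s :
  adjmx (prodl F s) = prodl (fun k => adjmx (F k)) (rev s).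
Proof.
elim: s => [|k s IH] /=; first by rewrite adjmx1.
by rewrite adjmxM IH rev_cons -cats1 prodl_cat /= mulmx1.
Qed.

Lemma bdiag_prodl p q T (F : T -> 'M[C]_(p * q)) f s :
  (forall k, bdiag (F k) (f k)) -> bdiag (prodl F s) (fun x => prodl (fun k => f k x) s).
Proof.
move=> H; elim: s => [|k s IH] /=; first exact: bdiag1.
exact: bdiag_mul.
Qed.

Lemma conjby_comp N (X Y S : 'M[C]_N) : conjby X (conjby Y S) = conjby (X *m Y) S.
Proof. by rewrite /conjby adjmxM !mulmxA. Qed.

Lemma conjby_sum N K (X : 'M[C]_N) (S : 'I_K -> 'M[C]_N) :
  conjby X (\sum_i S i) = \sum_i conjby X (S i).
Proof. by rewrite /conjby mulmx_sumr mulmx_suml. Qed.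

Lemma apply_seq_prodl N m (F : 'I_m -> 'M[C]_N) s S :
  apply_seq F s S = conjby (prodl F (rev s)) S.
Proof.
elim: s S => [|k s IH] S /=; first by rewrite /apply_seq /= /conjby adjmx1 mul1mx mulmx1.
rewrite /apply_seq /= -/(apply_seq F s _) IH conjby_comp rev_cons -cats1 prodl_cat /=.
by rewrite mulmx1.
Qed.

Definition sel p (b : bool) (A : 'M[C]_p) := if b then A else 1%:M.

Lemma bdiag_controlled n m k (Ct : 'M[C]_(2 ^ n)) :
  bdiag (controlled k Ct) (fun x : 'I_(2 ^ m) => sel (anc_bit k x) Ct).
Proof.
move=> x y; rewrite /controlled blkD !blk_tens /anc_proj !mxE /sel.
case: eqVneq => [->|_]; last by rewrite !scale0r addr0.
by case: (anc_bit k y); rewrite /= ?scale1r ?scale0r ?addr0 ?add0r.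
Qed.


Lemma pow2_gt0 m : (0 < 2 ^ m)%N.
Proof. by rewrite expn_gt0. Qed.

Definition z0 m : 'I_(2 ^ m) := Ordinal (pow2_gt0 m).

Lemma anc_zeroE m x y : anc_zero R m x y = ((x == z0 m) && (y == z0 m))%:R :> C.
Proof. by rewrite mxE. Qed.

Definition Aop n m K (C1 C2 : 'I_m -> 'M[C]_(2 ^ n)) (U : 'M[C]_(2 ^ n))
  (E : 'I_K -> 'M[C]_(2 ^ n)) (i : 'I_K) : 'M[C]_(2 ^ n * 2 ^ m) :=
  hadamard_all R n m *m prodl (fun k => controlled k (C2 k)) (rev (enum 'I_m))
  *m (E i *t (1%:M : 'M[C]_(2 ^ m))) *m (U *t (1%:M : 'M[C]_(2 ^ m)))
  *m prodl (fun k => controlled k (C1 k)) (enum 'I_m) *m hadamard_all R n m.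

Lemma final_sum n m K (C1 C2 : 'I_m -> 'M[C]_(2 ^ n)) U E rho :
  protocol_final_state C1 C2 U E rho =
  \sum_(i < K) conjby (Aop C1 C2 U E i) (rho *t anc_zero R m).
Proof.
rewrite /protocol_final_state /= !apply_seq_prodl revK /noise_on_compute.
rewrite conjby_sum conjby_sum; apply: eq_bigr => i _.
by rewrite !conjby_comp /Aop.
Qed.


Lemma blk_S0 n m w z (rho : 'M[C]_(2 ^ n)) :
  blk w z (rho *t anc_zero R m) = ((w == z0 m) && (z == z0 m))%:R *: rho.
Proof. by rewrite blk_tens anc_zeroE. Qed.

Lemma blk00_conj n m (A : 'M[C]_(2 ^ n * 2 ^ m)) rho :
  blk (z0 m) (z0 m) (conjby A (rho *t anc_zero R m)) =
  blk (z0 m) (z0 m) A *m rho *m adjmx (blk (z0 m) (z0 m) A).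
Proof.
have hS : forall z, blk (z0 m) z (A *m (rho *t anc_zero R m)) =
    (z == z0 m)%:R *: (blk (z0 m) (z0 m) A *m rho).
  move=> z; rewrite blk_mul (bigD1 (z0 m)) //= big1 ?addr0.
    by rewrite blk_S0 eqxx /= -scalemxAr.
  by move=> w /negbTE wz; rewrite blk_S0 wz /= scale0r mulmx0.
rewrite /conjby blk_mul (bigD1 (z0 m)) //= big1 ?addr0.
  by rewrite hS eqxx scale1r blk_adj.
by move=> z /negbTE zz; rewrite hS zz scale0r mul0mx.
Qed.

Lemma blk_Pl n m (G : 'M[C]_(2 ^ n * 2 ^ m)) x y :
  blk x y (allzero_proj R n m *m G) = (x == z0 m)%:R *: blk (z0 m) y G.
Proof.
rewrite blk_mul (bigD1 (z0 m)) //= big1 ?addr0.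
  by rewrite /allzero_proj blk_tens anc_zeroE eqxx andbT -scalemxAl mul1mx.
move=> z /negbTE zz; rewrite /allzero_proj blk_tens anc_zeroE zz andbF.
by rewrite scale0r mul0mx.
Qed.

Lemma blk_Pr n m (G : 'M[C]_(2 ^ n * 2 ^ m)) x y :
  blk x y (G *m allzero_proj R n m) = (y == z0 m)%:R *: blk x (z0 m) G.
Proof.
rewrite blk_mul (bigD1 (z0 m)) //= big1 ?addr0.
  by rewrite /allzero_proj blk_tens anc_zeroE eqxx /= -scalemxAr mulmx1.
move=> z /negbTE zz; rewrite /allzero_proj blk_tens anc_zeroE zz /=.
by rewrite scale0r mulmx0.
Qed.

Lemma adj_P n m : adjmx (allzero_proj R n m) = allzero_proj R n m.
Proof.
rewrite /allzero_proj adj_tens adjmx1; congr (_ *t _).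
by apply/matrixP => x y; rewrite /adjmx !mxE conjC_nat andbC.
Qed.

Lemma ptrace_blk n m (A : 'M[C]_(2 ^ n * 2 ^ m)) : ptrace_anc A = \sum_x blk x x A.
Proof. by apply/matrixP => a b; rewrite !mxE summxE; apply: eq_bigr => x _; rewrite mxE. Qed.

Lemma prob_blk n m K (C1 C2 : 'I_m -> 'M[C]_(2 ^ n)) U (E : 'I_K -> _) rho :
  prob_allzero C1 C2 U E rho = \tr (blk (z0 m) (z0 m) (protocol_final_state C1 C2 U E rho)).
Proof.
rewrite /prob_allzero blk_trace (bigD1 (z0 m)) //= big1 ?addr0.
  by rewrite blk_Pl eqxx scale1r.
by move=> x /negbTE xz; rewrite blk_Pl xz scale0r mxtrace0.
Qed.

Lemma post_blk n m K (C1 C2 : 'I_m -> 'M[C]_(2 ^ n)) U (E : 'I_K -> _) rho :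
  postselected_state C1 C2 U E rho =
  (prob_allzero C1 C2 U E rho)^-1 *: blk (z0 m) (z0 m) (protocol_final_state C1 C2 U E rho).
Proof.
rewrite /postselected_state; congr (_ *: _).
rewrite ptrace_blk /conjby adj_P (bigD1 (z0 m)) //= big1 ?addr0.
  by rewrite blk_Pr blk_Pl eqxx !scale1r.
by move=> x /negbTE xz; rewrite blk_Pr xz scale0r.
Qed.


Lemma ntens_rec_edge (A : 'M[C]_(2, 2)) c :
  (forall i j : 'I_2, (val i = 0 \/ val j = 0)%N -> A i j = c) ->
  forall k (i j : 'I_(2 ^ k.+1)), (val i = 0 \/ val j = 0)%N ->
    ntensmx_rec A k i j = c ^+ k.+1.
Proof.
move=> hA; elim=> [|k IH] i j hij; first by rewrite expr1; apply: hA.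
rewrite /= mxE exprS; congr (_ * _).
  by apply: hA => /=; case: hij => ->; rewrite div0n; [left|right].
by apply: IH => /=; case: hij => ->; rewrite mod0n; [left|right].
Qed.

Lemma ntens_edge (A : 'M[C]_(2, 2)) c :
  (forall i j : 'I_2, (val i = 0 \/ val j = 0)%N -> A i j = c) ->
  forall k (i j : 'I_(2 ^ k)), (val i = 0 \/ val j = 0)%N -> (A ^t k) i j = c ^+ k.
Proof.
move=> hA [|k] i j hij; last exact: ntens_rec_edge.
rewrite ntensmx0 expr0 mxE.
have : (i == j).
  case: i j {hij} => a ha [b hb]; rewrite -val_eqE /=.
  by move: ha hb; rewrite expn0 !ltnS !leqn0 => /eqP -> /eqP ->.
by move=> ->.
Qed.

Lemma hadamard_edge (i j : 'I_2) : (val i = 0 \/ val j = 0)%N -> hadamard R i j = (sqrtC 2)^-1.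
Proof.
move=> hij; rewrite /hadamard !mxE.
have -> : (i == 1 :> 'I_2) && (j == 1 :> 'I_2) = false.
  by case: hij => h; rewrite -!val_eqE /= h ?andbF.
by rewrite mulr1.
Qed.

Lemma blk_Hall n m x y : blk x y (hadamard_all R n m) = (hadamard R ^t m) x y *: 1%:M.
Proof. by rewrite /hadamard_all blk_tens. Qed.

Lemma blk_HXH n m (X : 'M[C]_(2 ^ n * 2 ^ m)) D : bdiag X D ->
  blk (z0 m) (z0 m) (hadamard_all R n m *m X *m hadamard_all R n m) =
  ((sqrtC 2)^-1 ^+ m * (sqrtC 2)^-1 ^+ m) *: \sum_z D z.
Proof.
move=> hX; have he := ntens_edge hadamard_edge.
rewrite blk_mul scaler_sumr; apply: eq_bigr => z _.
rewrite blk_mul (bigD1 z) //= big1 ?addr0; last first.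
  by move=> w /negbTE wz; rewrite hX wz scale0r mulmx0.
rewrite hX eqxx scale1r !blk_Hall !he /=; try by [left|right].
by rewrite -scalemxAl mul1mx -scalemxAr mulmx1 scalerA.
Qed.

End Proto.


Section Weyl.
Variable R : rcfType.
Local Notation C := (R[i]).
Variable N : nat.
Hypothesis N_gt0 : (0 < N)%N.

Lemma sum_collapse c (hc : (c < N)%N) (G : 'I_N -> C) :
  \sum_(y < N) ((val y == c)%:R * G y) = G (Ordinal hc).
Proof.
rewrite (bigD1 (Ordinal hc)) //= eqxx mul1r big1 ?addr0 // => y yc.
have /negbTE -> : val y != c by apply: contra yc => /eqP yc; apply/eqP/val_inj.
by rewrite mul0r.
Qed.

Lemma modlem (u v : 'I_N) s :
  (val u == (v + s) %% N)%N = (val v == (u + (N - s %% N)) %% N)%N.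
Proof.
have sN : (s %% N <= N)%N by rewrite ltnW // ltn_mod.
rewrite -(modnDmr v s); apply/eqP/eqP => ->.
  by rewrite modnDml -addnA subnKC // modnDr modn_small.
by rewrite modnDml -addnA addnC subnK // modnDl modn_small.
Qed.

Lemma modlemK (u : 'I_N) s : (((u + (N - s %% N)) %% N + s) %% N)%N = u.
Proof.
have hc : ((u + (N - s %% N)) %% N < N)%N by rewrite ltn_mod.
by have := modlem u (Ordinal hc) s; rewrite /= eqxx => /eqP <-.
Qed.

Definition Sh (s : nat) : 'M[C]_N := \matrix_(x, y) ((val y == (x + s) %% N)%N)%:R.

Lemma Sh0 : Sh 0 = 1%:M.
Proof. by apply/matrixP => x y; rewrite !mxE addn0 modn_small // eq_sym. Qed.

Lemma ShD s t : Sh s *m Sh t = Sh (s + t).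
Proof.
apply/matrixP => x v; rewrite !mxE.
have hc : ((x + s) %% N < N)%N by rewrite ltn_mod.
under eq_bigr => y _ do rewrite !mxE.
by rewrite sum_collapse /= modnDml addnA.
Qed.

Lemma Sh_unitary s : adjmx (Sh s) *m Sh s = 1%:M.
Proof.
apply/matrixP => u v; rewrite !mxE.
have hc : ((u + (N - s %% N)) %% N < N)%N by rewrite ltn_mod.
under eq_bigr => p _ do rewrite /adjmx !mxE conjC_nat modlem.
by rewrite sum_collapse /= modlemK eq_sym.
Qed.

Lemma Sh_twirl (d : 'rV[C]_N) :
  \sum_(b < N) adjmx (Sh b) *m diag_mx d *m Sh b = (\sum_p d 0 p) *: 1%:M.
Proof.
apply/matrixP => u v; rewrite summxE !mxE mulr_suml.
under eq_bigr => b _ do rewrite mul_mx_diag mxE.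
under eq_bigr => b _ do under eq_bigr => p _ do rewrite !mxE conjC_nat.
rewrite exchange_big /=; apply: eq_bigr => p _.
have hc : ((u + (N - p %% N)) %% N < N)%N by rewrite ltn_mod.
under eq_bigr => b _ do rewrite [(p + b)%N]addnC modlem mulrAC -mulrA.
by rewrite sum_collapse /= modlemK mulrC eq_sym.
Qed.


Variable w : C.
Hypothesis hw : N.-primitive_root w.

Definition Ph (s : nat) : 'M[C]_N := diag_mx (\row_(x < N) w ^+ (x * s)).

Lemma Ph0 : Ph 0 = 1%:M.
Proof. by apply/matrixP => x y; rewrite !mxE muln0 expr0. Qed.

Lemma PhD s t : Ph s *m Ph t = Ph (s + t).
Proof.
rewrite mulmx_diag; congr diag_mx; apply/rowP => x.
by rewrite !mxE -exprD mulnDr.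
Qed.

Lemma normw : `|w| = 1.
Proof.
apply/eqP; rewrite -(pexpr_eq1 N_gt0) // -normrX (prim_expr_order hw) normr1 //.
Qed.

Lemma conjwK k : (w ^+ k)^* * w ^+ k = 1.
Proof. by rewrite -normCKC normrX normw !expr1n. Qed.

Lemma adj_diag (d : 'rV[C]_N) : adjmx (diag_mx d) = diag_mx (\row_i (d 0 i)^* ).
Proof.
apply/matrixP => i j; rewrite /adjmx !mxE eq_sym.
by case: eqVneq => [->|_]; rewrite ?mulr1n ?mulr0n ?conjC0.
Qed.

Lemma Ph_unitary s : adjmx (Ph s) *m Ph s = 1%:M.
Proof.
rewrite adj_diag mulmx_diag; apply/matrixP => x y.
by rewrite !mxE conjwK.
Qed.

Lemma geom_sum (xi : C) : xi ^+ N = 1 -> xi != 1 -> \sum_(a < N) xi ^+ a = 0.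
Proof.
move=> h1 h2; have := subrX1 xi N; rewrite h1 subrr => /esym /eqP.
by rewrite mulf_eq0 subr_eq0 (negbTE h2) /= => /eqP.
Qed.

Lemma Ph_twirl (E : 'M[C]_N) :
  \sum_(a < N) adjmx (Ph a) *m E *m Ph a = N%:R *: diag_mx (\row_p E p p).
Proof.
apply/matrixP => u v; rewrite summxE !mxE.
under eq_bigr => a _ do rewrite adj_diag mul_diag_mx mul_mx_diag !mxE.
pose xi := (w ^+ u)^* * w ^+ v.
have -> : \sum_(a < N) ((w ^+ (u * a))^* * E u v * w ^+ (v * a)) = E u v * \sum_(a < N) xi ^+ a.
  rewrite mulr_sumr; apply: eq_bigr => a _.
  by rewrite /xi exprMn -rmorphXn -!exprM mulrAC mulrC.
rewrite eq_sym; have [uv|uv] := eqVneq v u.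
  have -> : xi = 1 by rewrite /xi uv conjwK.
  rewrite uv mulr1n (eq_bigr (fun _ => 1)) => [|a _]; last by rewrite expr1n.
  by rewrite sumr_const card_ord mulrC.
rewrite /=.
rewrite mulr0n mulr0 geom_sum ?mulr0 //.
  rewrite /xi exprMn -rmorphXn -!exprM mulnC exprM (prim_expr_order hw) expr1n.
  by rewrite mulnC exprM (prim_expr_order hw) expr1n rmorph1 mulr1.
apply: contra uv => /eqP h; apply/eqP.
have : w ^+ v = w ^+ u.
  by rewrite -[w ^+ v]mul1r -(conjwK u) mulrAC -/xi h mul1r.
move/eqP; rewrite (eq_prim_root_expr hw) !modn_small // => /eqP uv'.
by apply/val_inj.
Qed.

End Weyl.


Lemma modn_pow2S z k : (z %% 2 ^ k.+1 = z %% 2 ^ k + odd (z %/ 2 ^ k) * 2 ^ k)%N.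
Proof.
rewrite {1}(divn_eq (z %% 2 ^ k.+1) (2 ^ k)) addnC; congr (_ + _)%N.
  by rewrite modn_dvdm // dvdn_exp2l.
by rewrite expnS -modn_divl modn2.
Qed.

Section Tw.
Variable R : rcfType.
Local Notation C := (R[i]).

Lemma binexp p (A : nat -> 'M[C]_p) : A 0%N = 1%:M -> (forall s t, A s *m A t = A (s + t)%N) ->
  forall z k, prodl (fun j => sel (odd (z %/ 2 ^ j)) (A (2 ^ j)%N)) (iota 0 k) = A (z %% 2 ^ k)%N.
Proof.
move=> A0 AD z; elim=> [|k IH]; first by rewrite /= modn1 A0.
rewrite -[k.+1]addn1 iotaD prodl_cat IH /= mulmx1 addn1 modn_pow2S /sel.
by case: (odd _); rewrite ?mulmx1 ?addn0 // AD mul1n.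
Qed.


Variable n : nat.
Variable w : C.
Hypothesis hw : (2 ^ n).-primitive_root w.
Local Notation N := (2 ^ n)%N.

Definition Vk (k : nat) : 'M[C]_N := if (k < n)%N then Ph N w (2 ^ k) else Sh R N (2 ^ (k - n)).

Definition Wz m (z : 'I_(2 ^ m)) := prodl (fun k : 'I_m => sel (anc_bit k z) (Vk k)) (enum 'I_m).

Lemma Wz_eq (z : 'I_(2 ^ (n + n))) : Wz z = Ph N w (z %% N) *m Sh R N ((z %/ N) %% N).
Proof.
rewrite /Wz.
have -> : prodl (fun k : 'I_(n + n) => sel (anc_bit k z) (Vk k)) (enum 'I_(n + n)) =
    prodl (fun j => sel (odd (z %/ 2 ^ j)) (Vk j)) (map val (enum 'I_(n + n))).
  by rewrite prodl_map.
rewrite val_enum_ord iotaD prodl_cat add0n; congr (_ *m _).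
  rewrite -(binexp (Ph0 N w) (PhD N w)). eapply prodl_eq_in => j.
  by rewrite mem_iota add0n /= /Vk => ->.
have -> : iota n n = map (addn n) (iota 0 n) by rewrite -iotaDl addn0.
rewrite prodl_map -(binexp (Sh0 R N) (ShD R (pow2_gt0 n))).
eapply prodl_eq_in => j _; rewrite /Vk ltnNge leq_addr /= addKn (expnD 2 n j) divnMA //.
Qed.


Lemma sum_cast (V : nmodType) K K' (e : K = K') (F : nat -> V) :
  \sum_(z < K) F z = \sum_(z < K') F z.
Proof. by case: K' / e. Qed.

Lemma twirl_total (E : 'M[C]_N) :
  \sum_(z < 2 ^ (n + n)) adjmx (Wz z) *m E *m Wz z = (N%:R * \tr E) *: 1%:M.
Proof.
have N0 := pow2_gt0 n.
under eq_bigr => z _ do rewrite Wz_eq.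
rewrite (sum_cast (expnD 2 n n) (fun z => adjmx (Ph N w (z %% N) *m Sh R N (z %/ N %% N)) *m E *m
   (Ph N w (z %% N) *m Sh R N (z %/ N %% N)))) sum_tens /=.
have -> : \sum_(i < N) \sum_(j < N)
   adjmx (Ph N w ((i * N + j) %% N) *m Sh R N ((i * N + j) %/ N %% N)) *m E *m
   (Ph N w ((i * N + j) %% N) *m Sh R N ((i * N + j) %/ N %% N)) =
   \sum_(i < N) adjmx (Sh R N i) *m (\sum_(j < N) adjmx (Ph N w j) *m E *m Ph N w j) *m Sh R N i.
  apply: eq_bigr => i _; rewrite mulmx_sumr mulmx_suml; apply: eq_bigr => j _.
  rewrite modnMDl (modn_small (ltn_ord j)) divnMDl // (divn_small (ltn_ord j)) addn0.
  by rewrite (modn_small (ltn_ord i)) adjmxM !mulmxA.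
rewrite (Ph_twirl N0 hw).
under eq_bigr => i _ do rewrite -scalemxAr -scalemxAl.
rewrite -scaler_sumr (Sh_twirl N0) scalerA; congr (_ *: _); congr (_ * _).
by rewrite /mxtrace; apply: eq_bigr => p _; rewrite mxE.
Qed.

End Tw.


Lemma prim_root_exists (R : rcfType) n : (n > 0)%N -> exists z : R[i], n.-primitive_root z.
Proof.
pose p : {poly R[i]} := 'X^n - 1; have [r Dp] := closed_field_poly_normal p.
move=> n_gt0; rewrite (monicP _) ?monicXnsubC // scale1r in Dp.
have rn1: all n.-unity_root r by apply/allP=> z; rewrite -root_prod_XsubC -Dp.
have sz_r: (n < (size r).+1)%N.
  by rewrite -(size_prod_XsubC r id) -Dp size_XnsubC.
have [|z] := hasP (has_prim_root n_gt0 rn1 _ sz_r); last by exists z.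
by rewrite -separable_prod_XsubC -Dp separable_Xn_sub_1 // pnatr_eq0 -lt0n.
Qed.


Section Main.
Variable R : rcfType.
Local Notation C := (R[i]).

Lemma adj_sel p b (A : 'M[C]_p) : adjmx (sel b A) = sel b (adjmx A).
Proof. by case: b => //=; rewrite adjmx1. Qed.

Lemma prodl_conj p T (U : 'M[C]_p) (b : T -> bool) (F : T -> 'M[C]_p) s :
  U *m adjmx U = 1%:M -> adjmx U *m U = 1%:M ->
  prodl (fun k => sel (b k) (adjmx U *m F k *m U)) s =
  adjmx U *m prodl (fun k => sel (b k) (F k)) s *m U.
Proof.
move=> h1 h2; elim: s => [|k s IH] /=; first by rewrite mulmx1 h2.
rewrite IH /sel; case: (b k); last by rewrite !mul1mx.
by rewrite !mulmxA -(mulmxA _ U (adjmx U)) h1 mulmx1.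
Qed.

Lemma density_conj N (U rho : 'M[C]_N) : qunitary U -> density_matrix rho ->
  density_matrix (U *m rho *m adjmx U).
Proof.
move=> hU [[hr qr] tr1]; split; [split|].
- by rewrite !adjmxM adjmxK hr mulmxA.
- move=> v; have := qr (adjmx U *m v).
  by rewrite adjmxM adjmxK !mulmxA.
by rewrite mxtrace_mulC mulmxA hU mul1mx.
Qed.


Lemma Vk_unitary n (w : C) (k : nat) : (2 ^ n).-primitive_root w ->
  adjmx (Vk n w k) *m Vk n w k = 1%:M.
Proof.
move=> hw; rewrite /Vk; case: ifP => _.
  exact: (Ph_unitary (pow2_gt0 n) hw).
exact: (Sh_unitary R (pow2_gt0 n)).
Qed.

Lemma key_block n (w : C) (hw : (2 ^ n).-primitive_root w) (U : 'M[C]_(2 ^ n))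
  (hU : adjmx U *m U = 1%:M) (hU' : U *m adjmx U = 1%:M) K (E : 'I_K -> 'M[C]_(2 ^ n)) i :
  blk (z0 (n + n)) (z0 (n + n)) (Aop (fun k : 'I_(n + n) => adjmx U *m Vk n w k *m U)
     (fun k : 'I_(n + n) => adjmx (Vk n w k)) U E i) =
  ((sqrtC 2)^-1 ^+ (n + n) * (sqrtC 2)^-1 ^+ (n + n) * ((2 ^ n)%:R * \tr (E i))) *: U.
Proof.
set C1 := (fun k : 'I_(n + n) => adjmx U *m Vk n w k *m U).
set C2 := (fun k : 'I_(n + n) => adjmx (Vk n w k)).
have -> : Aop C1 C2 U E i = hadamard_all R n (n + n) *m
   (prodl (fun k => controlled k (C2 k)) (rev (enum 'I_(n + n)))
    *m (E i *t 1%:M) *m (U *t 1%:M)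
    *m prodl (fun k => controlled k (C1 k)) (enum 'I_(n + n))) *m hadamard_all R n (n + n).
  by rewrite /Aop !mulmxA.
rewrite (blk_HXH (bdiag_mul (bdiag_mul (bdiag_mul
   (bdiag_prodl _ (fun k => bdiag_controlled k (C2 k))) (@bdiag_tens1 _ _ (2 ^ (n + n)) (E i)))
   (@bdiag_tens1 _ _ (2 ^ (n + n)) U)) (bdiag_prodl _ (fun k => bdiag_controlled k (C1 k))))).
have -> : \sum_z (prodl (fun k : 'I_(n + n) => sel (anc_bit k z) (C2 k)) (rev (enum 'I_(n + n)))
     *m E i *m U *m prodl (fun k : 'I_(n + n) => sel (anc_bit k z) (C1 k)) (enum 'I_(n + n)))
   = ((2 ^ n)%:R * \tr (E i)) *: U.
  have -> : ((2 ^ n)%:R * \tr (E i)) *: U =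
     (\sum_(z < 2 ^ (n + n)) adjmx (Wz n w z) *m E i *m Wz n w z) *m U.
    by rewrite (twirl_total hw) -scalemxAl mul1mx.
  rewrite mulmx_suml; apply: eq_bigr => z _.
  rewrite /C1 (prodl_conj (fun k : 'I_(n + n) => anc_bit k z) (fun k : 'I_(n + n) => Vk n w k)) //.
  have -> : prodl (fun k : 'I_(n + n) => sel (anc_bit k z) (C2 k)) (rev (enum 'I_(n + n))) =
      adjmx (Wz n w z).
    by rewrite /Wz adj_prodl; eapply prodl_eq_in => k _; rewrite adj_sel.
  by rewrite !mulmxA -(mulmxA _ U (adjmx U)) hU' mulmx1.
by rewrite scalerA.
Qed.


Theorem theorem1_aux (n : nat) (Hn : (1 <= n)%N)
  (U : 'M[R[i]]_(2 ^ n)) (HU : qunitary U)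
  (rho : 'M[R[i]]_(2 ^ n)) (Hrho : density_matrix rho)
  (K : nat) (E : 'I_K -> 'M[R[i]]_(2 ^ n))
  (HE : \sum_(i < K) adjmx (E i) *m E i = 1%:M) :
  exists m : nat, (1 <= m)%N /\
  exists C1 C2 : 'I_m -> 'M[R[i]]_(2 ^ n),
    (forall k : 'I_m, qunitary (C1 k) /\ qunitary (C2 k) /\
                      C2 k *m U *m C1 k = U) /\
    (prob_allzero C1 C2 U E rho != 0 ->
     fidelity (postselected_state C1 C2 U E rho) (U *m rho *m adjmx U) = 1).
Proof.
have [w hw] := prim_root_exists R (pow2_gt0 n).
have hU' : U *m adjmx U = 1%:M := mulmx1C HU.
exists (n + n); split; first by rewrite addn_gt0 Hn.
exists (fun k : 'I_(n + n) => adjmx U *m Vk n w k *m U), (fun k : 'I_(n + n) => adjmx (Vk n w k)).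
split.
  move=> k; have hV := Vk_unitary k hw; have hV' := mulmx1C hV.
  split; [|split].
  - rewrite /qunitary !adjmxM adjmxK !mulmxA -(mulmxA _ U (adjmx U)) hU' mulmx1.
    by rewrite -(mulmxA _ (adjmx (Vk n w k))) hV mulmx1 HU.
  - by rewrite /qunitary adjmxK.
  - by rewrite !mulmxA -(mulmxA _ U (adjmx U)) hU' mulmx1 hV mul1mx.
move=> hp.
set C1 := (fun k : 'I_(n + n) => adjmx U *m Vk n w k *m U) in hp *.
set C2 := (fun k : 'I_(n + n) => adjmx (Vk n w k)) in hp *.
set kap := fun i => ((sqrtC 2)^-1 ^+ (n + n) * (sqrtC 2)^-1 ^+ (n + n) * ((2 ^ n)%:R * \tr (E i))).
have hB : blk (z0 (n + n)) (z0 (n + n)) (protocol_final_state C1 C2 U E rho) =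
    (\sum_i kap i * (kap i)^* ) *: (U *m rho *m adjmx U).
  rewrite final_sum blk_sum scaler_suml; apply: eq_bigr => i _.
  rewrite blk00_conj /C1 /C2 key_block // adjmxZ -scalemxAr -!scalemxAl scalerA.
  by rewrite mulrC.
have hprob : prob_allzero C1 C2 U E rho = \sum_i kap i * (kap i)^*.
  by rewrite prob_blk hB mxtraceZ (density_conj HU Hrho).2 mulr1.
rewrite post_blk hB hprob scalerA mulVf ?scale1r -?hprob //.
by apply: fidelity_self; apply: density_conj.
Qed.

End Main.


Theorem theorem1 (R : rcfType) (n : nat) (Hn : (1 <= n)%N)
  (U : 'M[R[i]]_(2 ^ n)) (HU : qunitary U)
  (rho : 'M[R[i]]_(2 ^ n)) (Hrho : density_matrix rho)
  (K : nat) (E : 'I_K -> 'M[R[i]]_(2 ^ n))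
  (HE : \sum_(i < K) adjmx (E i) *m E i = 1%:M) :
  exists m : nat, (1 <= m)%N /\
  exists C1 C2 : 'I_m -> 'M[R[i]]_(2 ^ n),
    (forall k : 'I_m, qunitary (C1 k) /\ qunitary (C2 k) /\
                      C2 k *m U *m C1 k = U) /\
    (prob_allzero C1 C2 U E rho != 0 ->
     fidelity (postselected_state C1 C2 U E rho) (U *m rho *m adjmx U) = 1).
Proof. exact: theorem1_aux. Qed.
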